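(* For integers $n\ge k\ge1$ let $A_{n,k}=\{(a_1,\dots,a_k)\in\mathbb Z^k:a_1,\dots,a_k\ge1,\ \sum_{i=1}^ka_i=n\}$ and $S_{n,k}=\sum_{(a_1,\dots,a_k)\in A_{n,k}}\prod_{i=1}^k\frac1{a_i}$. Then $$S_{n,k}\le\frac{(3\log(n+1))^{k-1}}{n}\quad\text{for all }n\ge k\ge1.$$ *)

(* Defs.v *)
From mathcomp Require Import all_boot all_order all_algebra.
From mathcomp Require Import all_classical all_reals all_analysis.
Set Implicit Arguments. Unset Strict Implicit. Unset Printing Implicit Defensive.
Import Order.TTheory GRing.Theory Num.Theory.
Local Open Scope ring_scope.

(* Compositions of n into k positive parts: a : 'I_k -> {0..n}, each a_i >= 1,
   sum a_i = n.  (Every composition has parts <= n, so the 'I_n.+1 bound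
   loses nothing.) *)
Definition A_nk (n k : nat) : {set {ffun 'I_k -> 'I_n.+1}} :=
  [set a : {ffun 'I_k -> 'I_n.+1} | [forall i, (0 < (a i : nat))%N] && ((\sum_(i < k) (a i : nat))%N == n)].

Definition S_nk (R : realType) (n k : nat) : R :=
  \sum_(a in A_nk n k) \prod_(i < k) ((a i : nat)%:R)^-1.

(* Main.v *)
Require Import Defs.
From mathcomp Require Import all_boot all_order all_algebra.
From mathcomp Require Import all_classical all_reals all_analysis.
From mathcomp Require Import zify ring lra.
Import Order.TTheory GRing.Theory Num.Theory.
Local Open Scope ring_scope.

Section Comb.
Variable R : realType.

Definition hh (m : nat) : R := \sum_(i < m) (i.+1%:R)^-1.

Lemma hh_ge0 m : 0 <= hh m.
Proof. by apply: sumr_ge0 => i _; rewrite invr_ge0 ler0n. Qed.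

Lemma two_le_sum k (F : 'I_k -> nat) i j : i != j -> (F i + F j <= \sum_l F l)%N.
Proof.
move=> ij; rewrite (bigD1 i) //= (bigD1 j) ?andbT 1?eq_sym //=.
by rewrite addnA leq_addr.
Qed.

Lemma comb_bound n k : (1 <= n)%N ->
  n%:R * S_nk R n k <= k%:R * (hh n.-1) ^+ k.-1.
Proof.
move=> n1.
set w := fun x : 'I_n.+1 => if (0 < x < n)%N then ((x : nat)%:R)^-1 else (0 : R).
set F := fun (j i : 'I_k) (x : 'I_n.+1) =>
  if i == j then (((x : nat) == 1%N)%:R : R) else w x.
set phi := fun (j : 'I_k) (a : {ffun 'I_k -> 'I_n.+1}) =>
  [ffun i => if i == j then (inord 1 : 'I_n.+1) else a i].
have Fge0 j i x : 0 <= F j i x.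
  rewrite /F /w; case: (i == j); first by rewrite ler0n.
  by case: ifP => // _; rewrite invr_ge0 ler0n.
have key : forall a, a \in A_nk n k -> forall j,
   (a j : nat)%:R * \prod_i ((a i : nat)%:R)^-1 = \prod_i F j i (phi j a i).
  move=> a; rewrite inE => /andP[/forallP apos /eqP asum] j.
  rewrite (bigD1 j) //= [RHS](bigD1 j) //= mulrA divff ?pnatr_eq0 -?lt0n ?apos //.
  have -> : F j j (phi j a j) = 1 by rewrite /F /phi ffunE !eqxx inordK.
  rewrite !mul1r; apply: eq_bigr => i ij.
  rewrite /F (negbTE ij) /phi ffunE (negbTE ij) /w apos /=.
  suff -> : (a i < n)%N by [].
  have := @two_le_sum _ (fun l => nat_of_ord (a l)) _ _ ij; rewrite /= asum; have := apos j; lia.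
have Hw : \sum_x w x = hh n.-1.
  rewrite /w /hh; case: n n1 {F phi Fge0 key w} => // m _.
  rewrite big_ord_recl /= add0r big_ord_recr /= /bump /= add1n ltnn addr0.
  by apply: eq_bigr => i _; rewrite add1n ltnS ltn_ord.
have H1 : \sum_(x : 'I_n.+1) (((x : nat) == 1%N)%:R : R) = 1.
  rewrite (bigD1 (inord 1)) //= inordK ?ltnS // eqxx big1 ?addr0 //.
  move=> x xn; case: eqP => // x1; case/negP: xn; apply/eqP/val_inj.
  by rewrite /= inordK ?ltnS // x1.
have Hprod j : \prod_i \sum_x F j i x = hh n.-1 ^+ k.-1.
  rewrite (bigD1 j) //= /F eqxx H1 mul1r.
  rewrite (eq_bigr (fun _ => hh n.-1)); last by move=> i /negbTE ->.
  have := prodr_const (predC1 j) (hh n.-1); rewrite cardC1 card_ord => <-.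
  by apply: eq_bigl => i; rewrite inE.
have inj j : {in A_nk n k &, injective (phi j)}.
  move=> a b; rewrite !inE => /andP[_ /eqP sa] /andP[_ /eqP sb] E.
  have Eo i : i != j -> a i = b i.
    by move=> ij; have := congr1 (fun f : {ffun 'I_k -> 'I_n.+1} => f i) E; rewrite /= !ffunE (negbTE ij).
  apply/ffunP => i; case: (eqVneq i j) => [->|ij]; last exact: Eo.
  apply/val_inj; move: sa sb; rewrite (bigD1 j) //= => sa; rewrite (bigD1 j) //= => sb.
  move: sa; rewrite (eq_bigr (fun l => nat_of_ord (b l))); last by move=> l lj; rewrite Eo.
  move=> sa.
  apply/eqP; rewrite -(eqn_add2r (\sum_(i < k | i != j) b i)); apply/eqP; exact: (etrans sa (esym sb)).
rewrite /S_nk mulr_sumr.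
rewrite (eq_bigr (fun a => \sum_j \prod_i F j i (phi j a i))); last first.
  move=> a aA; rewrite -(eq_bigr _ (fun j _ => key a aA j)) -mulr_suml.
  move: aA; rewrite inE => /andP[_ /eqP asum].
  by rewrite -natr_sum asum.
rewrite exchange_big /=.
apply: le_trans (_ : \sum_(j < k) hh n.-1 ^+ k.-1 <= _); last first.
  by rewrite sumr_const card_ord mulr_natl.
apply: ler_sum => j _.
rewrite -(big_imset (fun b : {ffun 'I_k -> 'I_n.+1} => \prod_i F j i (b i)) (inj j)) /=.
rewrite -(Hprod j) bigA_distr_bigA /=.
rewrite [X in _ <= X](bigID (fun b => b \in [set phi j x | x in A_nk n k])) /=.
rewrite lerDl; apply: sumr_ge0 => b _; apply: prodr_ge0 => i _; exact: Fge0.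
Qed.

Lemma hhS m : hh m.+1 = hh m + (m.+1%:R)^-1.
Proof. by rewrite /hh big_ord_recr. Qed.

Lemma ln_lb m : hh m.+1 - 1 <= ln (m.+1%:R : R).
Proof.
elim: m => [|m IH].
  by rewrite hhS /hh big_ord0 add0r invr1 subrr ln1.
rewrite hhS addrAC.
apply: le_trans (lerD IH (lexx _)) _.
have p1 : (0 : R) < m.+1%:R by rewrite ltr0n.
have p2 : (0 : R) < m.+2%:R by rewrite ltr0n.
have h1 : -1 < - (m.+2%:R : R)^-1 by rewrite ltrN2 invf_lt1 // ltr1n.
have := le_ln1Dx h1.
have -> : 1 - (m.+2%:R : R)^-1 = m.+1%:R / m.+2%:R.
  by field; rewrite ?pnatr_eq0 // lt0r_neq0.
rewrite ln_div ?posrE //.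
move: (ln (m.+1%:R : R)) (ln (m.+2%:R : R)) ((m.+2%:R : R)^-1) => a b c h; lra.
Qed.

Lemma step_ineq m : (3 <= m)%N -> 2 * hh m <= 3 * (hh m.+2 - 1) ->
  2 * hh m.+1 <= 3 * (hh m.+3 - 1).
Proof.
move=> m3 IH; rewrite (hhS m) (hhS m.+2).
have pa : (0 : R) < m.+1%:R by rewrite ltr0n.
have pb : (0 : R) < m.+3%:R by rewrite ltr0n.
have : 2 * (m.+1%:R : R)^-1 <= 3 * (m.+3%:R)^-1.
  rewrite -subr_ge0 (_ : 3 * (m.+3%:R : R)^-1 - 2 * (m.+1%:R)^-1
     = (3 * m.+1%:R - 2 * m.+3%:R) / (m.+1%:R * m.+3%:R)); last first.
    by field; rewrite ?lt0r_neq0.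
  apply: divr_ge0; last by rewrite mulr_ge0 // ltW.
  have : (3 : R) <= m%:R by rewrite ler_nat.
  rewrite -[m.+3]addn3 -[m.+1]addn1 !natrD; lra.
move: (hh m) (hh m.+2) IH ((m.+1%:R : R)^-1) ((m.+3%:R : R)^-1) => a b IH c d.
lra.
Qed.

Lemma rat_ineq m : (1 <= m)%N -> 2 * hh m <= 3 * (hh m.+2 - 1).
Proof.
have h5 : hh 5 = 137 / 60.
  rewrite !hhS /hh big_ord0 add0r.
  by field.
have h4 : hh 4 = 25 / 12 by rewrite !hhS /hh big_ord0 add0r; field.
have h3 : hh 3 = 11 / 6 by rewrite !hhS /hh big_ord0 add0r; field.
have h2 : hh 2 = 3 / 2 by rewrite !hhS /hh big_ord0 add0r; field.
have h1 : hh 1 = 1 by rewrite !hhS /hh big_ord0 add0r; field.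
case: m => // [[_|[_|m _]]].
- rewrite h1 h3; lra.
- rewrite h2 h4; lra.
elim: m => [|m IH]; first by rewrite h3 h5; lra.
exact: step_ineq.
Qed.

End Comb.

Theorem lemma9p1 (R : realType) (n k : nat) (hk : (1 <= k)%N) (hkn : (k <= n)%N) :
  S_nk R n k <= (3 * ln (n.+1%:R : R)) ^+ k.-1 / n%:R.
Proof.
have n1 : (1 <= n)%N := leq_trans hk hkn.
have np : (0:R) < n%:R by rewrite ltr0n.
have cb := comb_bound R n k n1.
rewrite ler_pdivlMr // mulrC.
apply: le_trans cb _.
case: k hk hkn => // [[_ _|k' _ hkn]].
  by rewrite /= !expr0 mulr1.
have m1 : (1 <= n.-1)%N by case: n n1 np hkn => // [[|]].
have Hb : 2 * hh R n.-1 <= 3 * ln (n.+1%:R : R).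
  apply: le_trans (rat_ineq R n.-1 m1) _.
  rewrite !prednK //; rewrite ler_pM2l //; exact: ln_lb.
have Hk : (k'.+2%:R : R) <= 2 ^+ k'.+1.
  by rewrite -natrX ler_nat; exact: ltn_expl.
apply: le_trans (ler_wpM2r (exprn_ge0 _ (hh_ge0 R _)) Hk) _.
rewrite /= -exprMn; apply: lerXn2r => //; rewrite nnegrE.
  by rewrite mulr_ge0 // hh_ge0.
by rewrite mulr_ge0 // ln_ge0 // ler1n.
Qed.
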